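(* Let $M$ be a partial commutative monoid and let $\mathrm{cl}$ be a strong closure operator on $\mathcal P(M)$ such that the collection $\mathcal C=\{X\subseteq M\mid \mathrm{cl}(X)=X\}$ of closed sets, ordered by inclusion, has a Heyting implication. Then $\mathcal C$ is a BI algebra with $\bot=\mathrm{cl}(\emptyset)$, $\top=M$, $X\wedge Y=X\cap Y$, $X\vee Y=\mathrm{cl}(X\cup Y)$, the given Heyting implication, $\mathsf{emp}=\mathrm{cl}(\mathbf 0)$, $X\ast Y=\mathrm{cl}(X\bullet Y)$ and $X-\!\!\ast\,Y=\mathrm{cl}(X-\!\!\bullet\,Y)$.
   Context: A partial commutative monoid $(M,\cdot,e)$ has a partial commutative, associative operation $\cdot$ with unit $e$; write $x\cdot y=\bot$ if undefined. On $\mathcal P(M)$ define $\mathbf 0=\{e\}$, $X\bullet Y=\{x\cdot y\mid x\in X,y\in Y,x\cdot y\ne\bot\}$, $X-\!\!\bullet\,Y=\{z\mid \forall x\in X.\ z\cdot x\ne\bot\Rightarrow z\cdot x\in Y\}$. A closure operator on $\mathcal P(M)$ is a map $\mathrm{cl}$ with $X\subseteq\mathrm{cl}(X)$, $X\subseteq Y\Rightarrow\mathrm{cl}(X)\subseteq\mathrm{cl}(Y)$, and $\mathrm{cl}(\mathrm{cl}(X))=\mathrm{cl}(X)$. It is strong if $\mathrm{cl}(X)\bullet Y\subseteq\mathrm{cl}(X\bullet Y)$ for all $X,Y$. A BI algebra is a tuple $(B,\bot,\top,\wedge,\vee,\to,\mathsf{emp},\ast,-\!\!\ast)$ where $(B,\bot,\top,\wedge,\vee,\to)$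 is a bounded Heyting algebra, $\ast$ is monotone, commutative, associative with unit $\mathsf{emp}$, and $a\ast b\le c\iff a\le b-\!\!\ast\,c$. *)

(* Defs.v *)
From Stdlib Require Import FunctionalExtensionality PropExtensionality.

Set Implicit Arguments.

(* op x y = None encodes x . y = bottom (undefined). *)
Definition obind {M : Type} (o : option M) (f : M -> option M) : option M :=
  match o with Some w => f w | None => None end.

Record PCM := {
  pcm_car :> Type;
  pcm_op : pcm_car -> pcm_car -> option pcm_car;
  pcm_e : pcm_car;
  pcm_comm : forall x y, pcm_op x y = pcm_op y x;
  (* x.(y.z) = (x.y).z, both sides defined or both undefined *)
  pcm_assoc : forall x y z,
    obind (pcm_op y z) (fun w => pcm_op x w) = obind (pcm_op x y) (fun w => pcm_op w z);
  pcm_unit : forall x, pcm_op pcm_e x = Some x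
}.

Definition pset (M : Type) := M -> Prop.
Definition psub {M : Type} (X Y : pset M) : Prop := forall x, X x -> Y x.

Section Ops.
Variable M : PCM.

Definition pzero : pset M := fun z => z = pcm_e M.
Definition pdot (X Y : pset M) : pset M :=
  fun z => exists x y, X x /\ Y y /\ pcm_op M x y = Some z.
Definition pwand (X Y : pset M) : pset M :=
  fun z => forall x, X x -> forall w, pcm_op M z x = Some w -> Y w.
End Ops.

Record closure_op (M : Type) := {
  cl :> pset M -> pset M;
  cl_ext : forall X, psub X (cl X);
  cl_mono : forall X Y, psub X Y -> psub (cl X) (cl Y);
  cl_idem : forall X, cl (cl X) = cl X
}.

Definition strong {M : PCM} (c : closure_op M) : Prop :=
  forall X Y, psub (pdot M (c X) Y) (c (pdot M X Y)).

Definition closed_set {M : Type} (c : closure_op M) := { X : pset M | c X = X }.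

Definition cset {M : Type} {c : closure_op M} (X : closed_set c) : pset M := proj1_sig X.

Definition cle {M : Type} {c : closure_op M} (X Y : closed_set c) : Prop :=
  psub (cset X) (cset Y).

Section ClosedOps.
Variable M : Type.
Variable c : closure_op M.

Definition clC (X : pset M) : closed_set c := exist _ (c X) (cl_idem c X).

Lemma full_closed : c (fun _ => True) = (fun _ => True).
Proof.
  apply functional_extensionality; intro x; apply propositional_extensionality;
  split; intro; [exact I | apply (cl_ext c); exact I].
Qed.

Lemma inter_closed (X Y : closed_set c) :
  c (fun z => cset X z /\ cset Y z) = (fun z => cset X z /\ cset Y z).
Proof.
  destruct X as [X HX], Y as [Y HY]; simpl.
  apply functional_extensionality; intro x; apply propositional_extensionality; split.
  - intro H; split.
    + rewrite <- HX. exact (cl_mono c (fun z (h : X z /\ Y z) => proj1 h) x H).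
    + rewrite <- HY. exact (cl_mono c (fun z (h : X z /\ Y z) => proj2 h) x H).
  - intro H; exact (cl_ext c _ x H).
Qed.

Definition topC : closed_set c := exist _ (fun _ => True) full_closed.
Definition botC : closed_set c := clC (fun _ => False).
Definition meetC (X Y : closed_set c) : closed_set c :=
  exist _ (fun z => cset X z /\ cset Y z) (inter_closed X Y).
Definition joinC (X Y : closed_set c) : closed_set c :=
  clC (fun z => cset X z \/ cset Y z).
End ClosedOps.

Definition empC {M : PCM} (c : closure_op M) : closed_set c := clC c (pzero M).
Definition starC {M : PCM} {c : closure_op M} (X Y : closed_set c) : closed_set c :=
  clC c (pdot M (cset X) (cset Y)).
Definition wandC {M : PCM} {c : closure_op M} (X Y : closed_set c) : closed_set c :=
  clC c (pwand M (cset X) (cset Y)).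

Definition is_heyting_imp {M : Type} {c : closure_op M}
  (imp : closed_set c -> closed_set c -> closed_set c) : Prop :=
  forall X Y Z : closed_set c, cle (meetC X Z) Y <-> cle Z (imp X Y).

Record is_BI_algebra (B : Type) (le : B -> B -> Prop)
  (bot top : B) (meet join imp : B -> B -> B)
  (emp : B) (star wand : B -> B -> B) : Prop := {
  bi_refl : forall a, le a a;
  bi_trans : forall a b c, le a b -> le b c -> le a c;
  bi_antisym : forall a b, le a b -> le b a -> a = b;
  bi_bot : forall a, le bot a;
  bi_top : forall a, le a top;
  bi_meet : forall a b c, le c (meet a b) <-> (le c a /\ le c b);
  bi_join : forall a b c, le (join a b) c <-> (le a c /\ le b c);
  bi_imp : forall a b c, le (meet c a) b <-> le c (imp a b);
  bi_star_mono : forall a a' b b', le a a' -> le b b' -> le (star a b) (star a' b');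
  bi_star_comm : forall a b, star a b = star b a;
  bi_star_assoc : forall a b c, star a (star b c) = star (star a b) c;
  bi_star_unit : forall a, star emp a = a;
  bi_wand : forall a b c, le (star a b) c <-> le a (wand b c)
}.

(* Main.v *)
Require Import Defs.
From Stdlib Require Import FunctionalExtensionality PropExtensionality ProofIrrelevance.

Lemma cs_eq {M : Type} {c : closure_op M} (X Y : closed_set c) :
  cset X = cset Y -> X = Y.
Proof.
  destruct X as [X HX], Y as [Y HY]; simpl; intro E; subst.
  f_equal; apply proof_irrelevance.
Qed.

Lemma pext {M : Type} (X Y : pset M) : psub X Y -> psub Y X -> X = Y.
Proof.
  intros H1 H2; apply functional_extensionality; intro x;
  apply propositional_extensionality; split; auto.
Qed.

Lemma closedP {M : Type} {c : closure_op M} (X : closed_set c) : c (cset X) = cset X.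
Proof. destruct X; simpl; auto. Qed.

Lemma pdot_comm (M : PCM) X Y : pdot M X Y = pdot M Y X.
Proof.
  apply pext; intros z (x & y & Hx & Hy & E); exists y, x; rewrite pcm_comm; auto.
Qed.

Lemma pdot_mono (M : PCM) X X' Y Y' : psub X X' -> psub Y Y' ->
  psub (pdot M X Y) (pdot M X' Y').
Proof. intros H1 H2 z (x & y & Hx & Hy & E); exists x, y; auto. Qed.

Lemma pdot_assoc (M : PCM) X Y Z :
  pdot M X (pdot M Y Z) = pdot M (pdot M X Y) Z.
Proof.
  apply pext.
  - intros z (x & w & Hx & (y & u & Hy & Hu & E1) & E2).
    pose proof (pcm_assoc M x y u) as A. rewrite E1 in A; simpl in A.
    rewrite E2 in A. destruct (pcm_op M x y) as [v|] eqn:E3; simpl in A; [|discriminate].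
    exists v, u; repeat split; auto. exists x, y; auto.
  - intros z (w & u & (x & y & Hx & Hy & E1) & Hu & E2).
    pose proof (pcm_assoc M x y u) as A. rewrite E1 in A; simpl in A.
    rewrite E2 in A. destruct (pcm_op M y u) as [v|] eqn:E3; simpl in A; [|discriminate].
    exists x, v; repeat split; auto. exists y, u; auto.
Qed.

Lemma cl_dot_l (M : PCM) (c : closure_op M) (Hs : strong c) X Y :
  c (pdot M (c X) Y) = c (pdot M X Y).
Proof.
  apply pext.
  - intros z H. rewrite <- cl_idem. revert z H. apply cl_mono. apply Hs.
  - apply cl_mono, pdot_mono; [apply cl_ext | intros x h; exact h].
Qed.

Lemma cl_dot_r (M : PCM) (c : closure_op M) (Hs : strong c) X Y :
  c (pdot M X (c Y)) = c (pdot M X Y).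
Proof. rewrite pdot_comm, cl_dot_l, pdot_comm; auto. Qed.

Theorem theorem5p8 (M : PCM) (c : closure_op M) (Hstrong : strong c)
  (imp : closed_set c -> closed_set c -> closed_set c)
  (Himp : is_heyting_imp imp) :
  is_BI_algebra (@cle M c) (botC c) (topC c) (@meetC M c) (@joinC M c) imp
    (empC c) (@starC M c) (@wandC M c).
Proof.
  constructor; unfold cle.
  - intros a x h; exact h.
  - intros a b d H1 H2 x h; auto.
  - intros a b H1 H2; apply cs_eq, pext; auto.
  - intros a x h; simpl in h. rewrite <- closedP. revert x h. apply cl_mono.
    intros x [].
  - intros a x _; simpl; exact I.
  - intros a b d; simpl; split.
    + intro H; split; intros x h; apply (H x h).
    + intros [H1 H2] x h; auto.
  - intros a b d; simpl; split.
    + intro H; split; intros x h; apply H, cl_ext; auto.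
    + intros [H1 H2] x h. rewrite <- closedP. revert x h. apply cl_mono.
      intros x [h|h]; auto.
  - intros a b d. rewrite <- (Himp a b d). unfold cle; simpl; split;
      intros H x [h1 h2]; apply H; auto.
  - intros a a' b b' H1 H2; simpl. apply cl_mono, pdot_mono; auto.
  - intros a b; apply cs_eq; simpl; rewrite pdot_comm; auto.
  - intros a b d; apply cs_eq; simpl.
    rewrite cl_dot_r, cl_dot_l, pdot_assoc; auto.
  - intros a; apply cs_eq; simpl. rewrite cl_dot_l; auto.
    rewrite <- (closedP a) at 2. f_equal. apply pext.
    + intros z (x & y & Hx & Hy & E). unfold pzero in Hx; subst.
      rewrite pcm_unit in E; injection E; intros; subst; auto.
    + intros z h. exists (pcm_e M), z; repeat split; auto. apply pcm_unit.
  - intros a b d; simpl. split.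
    + intros H x h. apply cl_ext. intros y hy w E. apply H, cl_ext.
      exists x, y; auto.
    + intros H.
      assert (Hw : psub (c (pwand M (cset b) (cset d))) (pwand M (cset b) (cset d))).
      { intros z hz y hy w E. rewrite <- closedP.
        assert (HH : psub (pdot M (pwand M (cset b) (cset d)) (cset b)) (cset d)).
        { intros u (p & q & Hp & Hq & E'). eapply Hp; eauto. }
        apply (@cl_mono _ c _ _ HH). apply (Hstrong _ _ w). exists z, y; auto. }
      intros x h. rewrite <- closedP. revert x h. apply cl_mono.
      intros u (p & q & Hp & Hq & E'). eapply Hw; eauto.
Qed.
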